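(* Let $1<\alpha<2$. If $\xi\in E_\alpha\setminus K_3$, then $\partial_y^3w(\xi)\neq0$. Moreover, $\partial_y^3w(P)=0$ for all $P\in K_3$.
   Context: $\mathbb{T}^2=[-\pi,\pi]^2$, $M=\mathbb{T}^2\setminus\{0\}$, $w(\xi)=\left(\sin^2(\frac{\xi_1}{2})+\sin^2(\frac{\xi_2}{2})\right)^{\frac{\alpha}{2}}$ (real analytic on $M$). $K_3=\{(\pm\frac\pi2,\pm\frac\pi2)\}$. $E_\alpha=\{\xi\in M:\det D^2w(\xi)=0\}$; at such points $D^2w(\xi)$ has rank one. For $\xi\in E_\alpha$, let $k_2(\xi)$ be a unit vector spanning the kernel of $D^2w(\xi)$ and $\partial_y=k_2(\xi)\cdot\nabla$ denote the directional derivative in that direction (so $\partial_y^3w(\xi)=\sum_{i,j,l}k_{2,i}k_{2,j}k_{2,l}\partial_{ijl}w(\xi)$). *)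

(* Defs.v *)
From Stdlib Require Import Reals.
From Coquelicot Require Import Coquelicot.
Open Scope R_scope.

Definition coord (i : bool) (v : R * R) : R := if i then snd v else fst v.

(* w(xi) = (sin^2(xi_1/2) + sin^2(xi_2/2))^(alpha/2), as a function on R^2.
   (Rpower is only used at positive arguments near points of M.) *)
Definition w (alpha : R) (xi : R * R) : R :=
  Rpower (sin (fst xi / 2) ^ 2 + sin (snd xi / 2) ^ 2) (alpha / 2).

Definition dpart (i : bool) (f : R * R -> R) : R * R -> R :=
  fun xi => if i then Derive (fun t => f (fst xi, t)) (snd xi)
            else Derive (fun t => f (t, snd xi)) (fst xi).

Definition hess (f : R * R -> R) (xi : R * R) (i j : bool) : R :=
  dpart i (dpart j f) xi.

Definition hess_det (f : R * R -> R) (xi : R * R) : R :=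
  hess f xi false false * hess f xi true true
  - hess f xi false true * hess f xi true false.

Definition sumb (g : bool -> R) : R := g false + g true.

Definition in_hess_kernel (f : R * R -> R) (xi : R * R) (k : R * R) : Prop :=
  forall i : bool, sumb (fun j => hess f xi i j * coord j k) = 0.

Definition unit_vec (k : R * R) : Prop := fst k ^ 2 + snd k ^ 2 = 1.

Definition dir3 (f : R * R -> R) (xi : R * R) (k : R * R) : R :=
  sumb (fun i => sumb (fun j => sumb (fun l =>
    coord i k * coord j k * coord l k * dpart i (dpart j (dpart l f)) xi))).

Definition in_M (xi : R * R) : Prop :=
  -PI <= fst xi <= PI /\ -PI <= snd xi <= PI /\ xi <> (0, 0).

Definition in_E (alpha : R) (xi : R * R) : Prop :=
  in_M xi /\ hess_det (w alpha) xi = 0.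

Definition in_K3 (xi : R * R) : Prop :=
  (fst xi = PI / 2 \/ fst xi = - (PI / 2)) /\
  (snd xi = PI / 2 \/ snd xi = - (PI / 2)).

(* Main.v *)
Require Import Defs.
From Stdlib Require Import Reals Lra Psatz.
From Coquelicot Require Import Coquelicot.
Open Scope R_scope.

Definition Sf (x : R*R) := sin (fst x / 2) ^ 2 + sin (snd x / 2) ^ 2.
Definition Ef (a : R) (x : R*R) := exp (a * ln (Sf x)).
Definition sg (i : bool) x := sin (coord i x / 2).
Definition cg (i : bool) x := cos (coord i x / 2).
Definition Pf i x := sg i x * cg i x.
Definition Qf i x := (cg i x ^ 2 - sg i x ^ 2) / 2.
Definition W1 a (l : bool) x := a * Ef a x / Sf x * Pf l x.
Definition dl (i j : bool) : R := if Bool.eqb i j then 1 else 0.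
Definition W2 a (j l : bool) x := a * Ef a x *
  ((a-1) * Pf j x * Pf l x / Sf x ^ 2 + dl j l * Qf l x / Sf x).
Definition W3 a (i j l : bool) x := a * Ef a x *
  ((a-1)*(a-2) * Pf i x * Pf j x * Pf l x / Sf x ^ 3
   + (a-1) * (dl i j * Qf i x * Pf l x + dl i l * Qf i x * Pf j x + dl j l * Qf j x * Pf i x) / Sf x ^ 2
   - dl i j * dl j l * Pf i x / Sf x).

Ltac fin := unfold W1, W2, W3, dl, Ef, Sf, Pf, Qf, sg, cg, coord in *; simpl in *; unfold Rdiv in *; simpl in *;
  repeat split; first [lra | nra | (field; repeat split; first [lra|nra]) ].

Lemma d1 alpha l x : 0 < Sf x -> dpart l (w alpha) x = W1 (alpha/2) l x.
Proof.
destruct x as [x1 x2]; intros HS.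
unfold w, Rpower, dpart; destruct l; simpl; set (a := alpha/2);
 apply is_derive_unique; auto_derive; fin.
Qed.

Lemma d2 a j l x : 0 < Sf x -> dpart j (W1 a l) x = W2 a j l x.
Proof.
destruct x as [x1 x2]; intros HS.
unfold W1, Ef, Sf, Pf, sg, cg, dpart; destruct j, l; simpl;
 apply is_derive_unique; auto_derive; fin.
Qed.

Lemma d3 a i j l x : 0 < Sf x -> dpart i (W2 a j l) x = W3 a i j l x.
Proof.
destruct x as [x1 x2]; intros HS.
unfold W2, Ef, Sf, Pf, Qf, dl, sg, cg, dpart; destruct i, j, l; simpl;
 apply is_derive_unique; auto_derive; fin.
Qed.
Lemma Sf_cont_loc (i : bool) x : 0 < Sf x ->
  locally (coord i x) (fun t => 0 < Sf (if i then (fst x, t) else (t, snd x))).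
Proof.
intros HS.
assert (Hc : continuous (fun t => Sf (if i then (fst x, t) else (t, snd x))) (coord i x)).
{ apply (@ex_derive_continuous R_AbsRing R_NormedModule). destruct i; destruct x; unfold Sf; simpl; auto_derive; auto. }
assert (E : Sf (if i then (fst x, coord i x) else (coord i x, snd x)) = Sf x).
{ destruct i, x; reflexivity. }
assert (Hl : locally (Sf (if i then (fst x, coord i x) else (coord i x, snd x))) (fun u : R => 0 < u)).
{ apply (open_gt 0). rewrite E. exact HS. }
exact (Hc _ Hl).
Qed.

Lemma dpart_ext (f g : R*R -> R) i x :
  (forall y, 0 < Sf y -> f y = g y) -> 0 < Sf x -> dpart i f x = dpart i g x.
Proof.
intros Hfg HS.
generalize (Sf_cont_loc i x HS); intro L.
unfold dpart; destruct i; apply Derive_ext_loc; simpl in L;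
  apply (filter_imp _ _ (fun t Ht => Hfg _ Ht) L).
Qed.

Lemma hess_eq alpha x i j : 0 < Sf x -> hess (w alpha) x i j = W2 (alpha/2) i j x.
Proof.
intros HS. unfold hess. rewrite <- d2 by exact HS.
apply dpart_ext; [intros; apply d1; auto | exact HS].
Qed.

Lemma d3w_eq alpha x i j l : 0 < Sf x ->
  dpart i (dpart j (dpart l (w alpha))) x = W3 (alpha/2) i j l x.
Proof.
intros HS. rewrite <- d3 by exact HS.
apply dpart_ext; [|exact HS]. intros y Hy. rewrite <- d2 by exact Hy.
apply dpart_ext; [intros; apply d1; auto | exact Hy].
Qed.

Definition PP c1 c2 := (2-c1-c2)*((1-c1^4)*c2^3 + (1-c2^4)*c1^3) - c1*c2*((c1+c2)*(1-c1*c2))^2.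

Lemma pos_case c1 c2 : 0 < c1 <= 1 -> 0 < c2 <= 1 -> c1 + c2 < 2 -> PP c1 c2 > 0.
Proof.
intros. unfold PP.
replace ((2-c1-c2)*((1-c1^4)*c2^3 + (1-c2^4)*c1^3) - c1*c2*((c1+c2)*(1-c1*c2))^2)
 with (c1*c2*((1-c1)*(1-c2))*(c1-c2)^2 + (2-c1-c2)*((1-c1)^2*(1+c1)*c2^3 + (1-c2)^2*(1+c2)*c1^3)) by ring.
assert (0 <= c1*c2*((1-c1)*(1-c2))*(c1-c2)^2).
{ apply Rmult_le_pos; [|apply pow2_ge_0]. apply Rmult_le_pos; apply Rmult_le_pos; lra. }
assert (0 < (1-c1)^2*(1+c1)*c2^3 + (1-c2)^2*(1+c2)*c1^3).
{ assert (0 < c1^3) by (apply pow_lt; lra). assert (0 < c2^3) by (apply pow_lt; lra).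
  destruct (Rlt_or_le c1 1).
  - assert (0 < (1-c1)^2*(1+c1)*c2^3) by (repeat apply Rmult_lt_0_compat; nra).
    assert (0 <= (1-c2)^2*(1+c2)*c1^3) by (repeat apply Rmult_le_pos; nra). lra.
  - assert (0 < (1-c2)^2*(1+c2)*c1^3) by (repeat apply Rmult_lt_0_compat; nra).
    assert (0 <= (1-c1)^2*(1+c1)*c2^3) by (repeat apply Rmult_le_pos; nra). lra. }
assert (0 < (2-c1-c2)*((1-c1)^2*(1+c1)*c2^3 + (1-c2)^2*(1+c2)*c1^3)) by (apply Rmult_lt_0_compat; lra).
lra.
Qed.

Lemma neg_aux x y : 0 < y -> y < x -> x <= 1 ->
  (2+x-y)*(x^2+x*y+y^2+x^3*y^3) > x*y*(x-y)*(1+x*y)^2.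
Proof.
intros. assert (h1: x^2+x*y+y^2+x^3*y^3 >= x*y*(1+x*y)^2).
{ assert (0 < x*y) by nra. assert (x*y <= 1) by nra. nra. }
assert (0 < x*y*(1+x*y)^2) by (apply Rmult_lt_0_compat; nra).
nra.
Qed.

Lemma neg_case c1 c2 : -1 <= c1 < 0 -> 0 < c2 -> c1 + c2 < 0 -> PP c1 c2 < 0.
Proof.
intros. unfold PP.
replace ((2-c1-c2)*((1-c1^4)*c2^3 + (1-c2^4)*c1^3) - c1*c2*((c1+c2)*(1-c1*c2))^2)
  with ((c2 - (-c1)) * ((2+(-c1)-c2)*((-c1)^2+(-c1)*c2+c2^2+(-c1)^3*c2^3) - (-c1)*c2*((-c1)-c2)*(1+(-c1)*c2)^2)) by ring.
generalize (neg_aux (-c1) c2 ltac:(lra) ltac:(lra) ltac:(lra)). intro.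
assert (c2 - - c1 < 0) by lra. apply Rmult_neg_pos; lra.
Qed.

Lemma PP_sym c1 c2 : PP c1 c2 = PP c2 c1.
Proof. unfold PP; ring. Qed.

Lemma mneg a b : a < 0 -> b < 0 -> 0 < a * b.
Proof. intros; nra. Qed.

Lemma sgn1 X Y : 0 < X*Y -> Y < 0 -> X < 0.
Proof. intros; nra. Qed.
Lemma sgn2 X Y : X*Y < 0 -> 0 < Y -> X < 0.
Proof. intros; nra. Qed.
Lemma sgn3 X Y : 0 < X*Y -> 0 < Y -> 0 < X.
Proof. intros; nra. Qed.

Lemma KL c1 c2 : -1 <= c1 <= 1 -> -1 <= c2 <= 1 -> c1 <> 0 -> c2 <> 0 -> c1 + c2 < 2 ->
  0 < (c1+c2)*(1-c1*c2) * (c1*c2) -> 0 < c1*c2*PP c1 c2.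
Proof.
intros H1 H2 H3 H4 H5 H6.
assert (0 <= 1 - c1*c2) by nra.
destruct (Rlt_or_le 0 c1); destruct (Rlt_or_le 0 c2).
- generalize (pos_case c1 c2 ltac:(lra) ltac:(lra) H5); intro; apply Rmult_lt_0_compat; [apply Rmult_lt_0_compat|]; lra.
- assert (c2 < 0) by lra.
  assert (c1*c2 < 0) by nra.
  assert (c1 + c2 < 0).
  { apply (sgn2 _ (1-c1*c2)); [apply (sgn1 _ (c1*c2)) |]; lra. }
  generalize (neg_case c2 c1 ltac:(lra) ltac:(lra) ltac:(lra)); rewrite PP_sym; intro; apply mneg; lra.
- assert (c1 < 0) by lra.
  assert (c1*c2 < 0) by nra.
  assert (c1 + c2 < 0).
  { apply (sgn2 _ (1-c1*c2)); [apply (sgn1 _ (c1*c2)) |]; lra. }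
  generalize (neg_case c1 c2 ltac:(lra) ltac:(lra) ltac:(lra)); intro; apply mneg; lra.
- assert (c1 < 0) by lra. assert (c2 < 0) by lra.
  assert (0 < c1*c2) by (apply mneg; lra).
  assert (c1*c2 <= 1) by nra.
  destruct (Req_dec (c1*c2) 1) as [e|e]; [rewrite e in H6; lra|].
  assert (0 < 1 - c1*c2) by lra.
  assert (0 < c1 + c2); [|lra].
  apply (sgn3 _ (1-c1*c2)); [apply (sgn3 _ (c1*c2)) |]; lra.
Qed.
Lemma sq_bound c : c^2 <= 1 -> -1 <= c <= 1.
Proof. intros; split; nra. Qed.

Lemma core b c1 c2 p1 p2 k1 k2 S t :
 0 < b -> S = 1-(c1+c2)/2 -> 0 < S -> p1^2 = (1-c1^2)/4 -> p2^2 = (1-c2^2)/4 ->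
 k1^2+k2^2 = 1 -> t = p1*k1+p2*k2 -> S*c1*k1 = 2*b*t*p1 -> S*c2*k2 = 2*b*t*p2 ->
 ~(c1 = 0 /\ c2 = 0) ->
 b*(1+b)*t^3 - 3*b*S*t*(c1/2*k1^2 + c2/2*k2^2) - S^2*(p1*k1^3+p2*k2^3) <> 0.
Proof.
intros Hb HS HSp Hp1 Hp2 Hk Ht K1 K2 Hc.
assert (Hq : S*(c1/2*k1^2+c2/2*k2^2) = b*t^2).
{ transitivity ((S*c1*k1)*k1/2 + (S*c2*k2)*k2/2); [field|].
  rewrite K1, K2. transitivity (b*t*(p1*k1+p2*k2)); [field|]. rewrite <- Ht. ring. }
replace (b*(1+b)*t^3 - 3*b*S*t*(c1/2*k1^2 + c2/2*k2^2) - S^2*(p1*k1^3+p2*k2^3))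
  with (b*(1-2*b)*t^3 - S^2*(p1*k1^3+p2*k2^3))
  by (transitivity (b*(1+b)*t^3 - 3*b*t*(S*(c1/2*k1^2 + c2/2*k2^2)) - S^2*(p1*k1^3+p2*k2^3));
      [rewrite Hq; ring | field]).
assert (HSn : S <> 0) by lra.
destruct (Req_dec t 0) as [t0|tn].
- rewrite t0 in K1, K2 |- *.
  assert (c1*k1 = 0).
  { assert (S*(c1*k1) = 0) by (rewrite <- Rmult_assoc, K1; ring).
    destruct (Rmult_integral _ _ H); [lra|auto]. }
  assert (c2*k2 = 0).
  { assert (S*(c2*k2) = 0) by (rewrite <- Rmult_assoc, K2; ring).
    destruct (Rmult_integral _ _ H0); [lra|auto]. }
  destruct (Req_dec c1 0) as [c10|c1n].
  + assert (c2n : c2 <> 0) by tauto.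
    assert (k2 = 0) by (destruct (Rmult_integral _ _ H0); [tauto|auto]).
    subst k2.
    assert (k1^2 = 1) by lra.
    assert (k1 <> 0) by (intro; subst k1; lra).
    subst c1.
    assert (p1 <> 0) by (intro; subst p1; lra).
    replace (b * (1 - 2 * b) * 0 ^ 3 - S ^ 2 * (p1 * k1 ^ 3 + p2 * 0 ^ 3)) with (-(S^2*p1*k1^3)) by ring.
    apply Ropp_neq_0_compat.
    repeat apply Rmult_integral_contrapositive_currified; try apply pow_nonzero; auto.
  + assert (k1 = 0) by (destruct (Rmult_integral _ _ H); [tauto|auto]).
    subst k1.
    assert (k2^2 = 1) by lra.
    assert (k2 <> 0) by (intro; subst k2; lra).
    assert (c2 = 0) by (destruct (Rmult_integral _ _ H0); [auto|tauto]).
    subst c2.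
    assert (p2 <> 0) by (intro; subst p2; lra).
    replace (b * (1 - 2 * b) * 0 ^ 3 - S ^ 2 * (p1 * 0 ^ 3 + p2 * k2 ^ 3)) with (-(S^2*p2*k2^3)) by ring.
    apply Ropp_neq_0_compat.
    repeat apply Rmult_integral_contrapositive_currified; try apply pow_nonzero; auto.
- assert (c1n : c1 <> 0).
  { intro; subst c1. assert (2*b*t*p1 = 0) by (rewrite <- K1; ring).
    assert (p1 = 0).
    { destruct (Rmult_integral _ _ H) as [h|h]; [|auto]. exfalso.
      destruct (Rmult_integral _ _ h) as [h'|h']; [lra|auto]. }
    subst p1. lra. }
  assert (c2n : c2 <> 0).
  { intro; subst c2. assert (2*b*t*p2 = 0) by (rewrite <- K2; ring).
    assert (p2 = 0).
    { destruct (Rmult_integral _ _ H) as [h|h]; [|auto]. exfalso.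
      destruct (Rmult_integral _ _ h) as [h'|h']; [lra|auto]. }
    subst p2. lra. }
  assert (E1 : k1 = 2*b*t*p1/(S*c1)) by (rewrite <- K1; field; auto).
  assert (E2 : k2 = 2*b*t*p2/(S*c2)) by (rewrite <- K2; field; auto).
  assert (A1 : p1*k1^3 = (1-c1^2)^2/16*(8*b^3*t^3)/(S*c1)^3).
  { rewrite E1. replace (p1 * (2*b*t*p1/(S*c1))^3) with ((p1^2)^2 * (8*b^3*t^3)/(S*c1)^3) by (field; auto).
    rewrite Hp1. field; auto. }
  assert (A2 : p2*k2^3 = (1-c2^2)^2/16*(8*b^3*t^3)/(S*c2)^3).
  { rewrite E2. replace (p2 * (2*b*t*p2/(S*c2))^3) with ((p2^2)^2 * (8*b^3*t^3)/(S*c2)^3) by (field; auto).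
    rewrite Hp2. field; auto. }
  assert (B1 : p1*k1 = (1-c1^2)*(2*b*t)/(4*(S*c1))).
  { rewrite E1. replace (p1 * (2*b*t*p1/(S*c1))) with ((p1^2) * (2*b*t)/(S*c1)) by (field; auto).
    rewrite Hp1. field; auto. }
  assert (B2 : p2*k2 = (1-c2^2)*(2*b*t)/(4*(S*c2))).
  { rewrite E2. replace (p2 * (2*b*t*p2/(S*c2))) with ((p2^2) * (2*b*t)/(S*c2)) by (field; auto).
    rewrite Hp2. field; auto. }
  set (N := (c1+c2)*(1-c1*c2)).
  assert (HN : 2*S*c1*c2 = b*N).
  { rewrite B1, B2 in Ht.
    assert (t*(2*S*c1*c2 - b*N) = 0).
    { transitivity ((2*S*c1*c2)*(t - ((1-c1^2)*(2*b*t)/(4*(S*c1)) + (1-c2^2)*(2*b*t)/(4*(S*c2))))).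
      - unfold N. field. auto.
      - rewrite <- Ht. ring. }
    destruct (Rmult_integral _ _ H); [tauto|lra]. }
  assert (Nn : N <> 0).
  { intro h. rewrite h in HN.
    assert (S*c1*c2 <> 0) by (repeat apply Rmult_integral_contrapositive_currified; auto). lra. }
  assert (Npos : 0 < N*(c1*c2)).
  { apply (sgn3 _ b); [|lra].
    assert (e : N*(c1*c2)*b = 2*S*(c1*c2)^2) by (transitivity ((b*N)*(c1*c2)); [ring|rewrite <- HN; ring]).
    rewrite e.
    apply Rmult_lt_0_compat; [lra|]. assert (c1*c2 <> 0) by (apply Rmult_integral_contrapositive_currified; auto).
    replace (_^2) with (Rsqr (c1*c2)) by (unfold Rsqr; ring); apply Rsqr_pos_lt; auto. }
  assert (HSn' : 1 - (c1+c2)/2 <> 0) by (rewrite <- HS; auto).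
  assert (Nn' : (c1+c2)*(1-c1*c2) <> 0) by exact Nn.
  assert (ID : t*(b*(1-2*b)*t^3 - S^2*(p1*k1^3+p2*k2^3)) = - b * t^4 * (c1*c2*PP c1 c2) / ((c1*c2)^2 * N^2)).
  { rewrite A1, A2. assert (Hb' : b = 2*S*c1*c2/N) by (rewrite HN; field; auto).
    rewrite Hb'. rewrite HS. unfold PP, N. field. repeat split; auto; intro h; first [apply Nn'; rewrite h; ring | apply HSn'; lra]. }
  assert (KL' : 0 < c1*c2*PP c1 c2).
  { assert (h1 : c1^2 <= 1) by (assert (0 <= p1^2) by apply pow2_ge_0; lra).
    assert (h2 : c2^2 <= 1) by (assert (0 <= p2^2) by apply pow2_ge_0; lra).
    apply KL; auto; try (apply sq_bound; exact h1); try (apply sq_bound; exact h2); lra. }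
  assert (t2 : 0 < t*t) by (apply (Rsqr_pos_lt t); auto).
  assert (t4 : 0 < t^4) by (replace (t^4) with ((t*t)*(t*t)) by ring; apply Rmult_lt_0_compat; auto).
  assert (c2p : 0 < (c1*c2)^2 * N^2).
  { assert (c1*c2 <> 0) by (apply Rmult_integral_contrapositive_currified; auto).
    apply Rmult_lt_0_compat.
    - replace ((c1*c2)^2) with (Rsqr (c1*c2)) by (unfold Rsqr; ring); apply Rsqr_pos_lt; auto.
    - replace (N^2) with (Rsqr N) by (unfold Rsqr; ring); apply Rsqr_pos_lt; auto. }
  assert (neg : t*(b*(1-2*b)*t^3 - S^2*(p1*k1^3+p2*k2^3)) < 0).
  { rewrite ID. unfold Rdiv. rewrite Ropp_mult_distr_l_reverse, Ropp_mult_distr_l_reverse, Ropp_mult_distr_l_reverse.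
    apply Ropp_lt_gt_0_contravar. apply Rmult_lt_0_compat; [|apply Rinv_0_lt_compat; auto].
    apply Rmult_lt_0_compat; [apply Rmult_lt_0_compat|]; auto. }
  intro h. rewrite h in neg. lra.
Qed.

Lemma sin_half_nz y : -PI <= y <= PI -> y <> 0 -> sin (y/2) <> 0.
Proof.
intros Hy Hn. assert (Hpi := PI_RGT_0).
destruct (Rlt_or_le 0 y).
- apply Rgt_not_eq. apply sin_gt_0; lra.
- apply Rlt_not_eq. apply sin_lt_0_var; [lra|]. assert (y < 0) by (destruct H; [auto|tauto]). lra.
Qed.

Lemma Sf_pos_M x : in_M x -> 0 < Sf x.
Proof.
destruct x as [x1 x2]. intros [B1 [B2 Hn]]. simpl in B1, B2. unfold Sf; simpl.
destruct (Req_dec x1 0) as [e|e].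
- subst x1. assert (x2 <> 0) by (intro; subst; apply Hn; reflexivity).
  generalize (sin_half_nz x2 B2 H); intro h.
  assert (0 < sin (x2/2)^2) by (replace (sin (x2/2)^2) with (Rsqr (sin (x2/2))) by (unfold Rsqr; ring); apply Rsqr_pos_lt; auto).
  assert (0 <= sin (0/2)^2) by apply pow2_ge_0. lra.
- generalize (sin_half_nz x1 B1 e); intro h.
  assert (0 < sin (x1/2)^2) by (replace (sin (x1/2)^2) with (Rsqr (sin (x1/2))) by (unfold Rsqr; ring); apply Rsqr_pos_lt; auto).
  assert (0 <= sin (x2/2)^2) by apply pow2_ge_0. lra.
Qed.

Lemma cos_half y : cos (y/2)^2 - sin (y/2)^2 = cos y.
Proof.
replace (cos y) with (cos (2*(y/2))) by (f_equal; field).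
rewrite cos_2a. ring.
Qed.

Lemma cos0_M y : -PI <= y <= PI -> cos y = 0 -> y = PI/2 \/ y = -(PI/2).
Proof.
intros Hy h. assert (Hpi := PI_RGT_0).
destruct (Rle_or_lt 0 y).
- destruct (cos_eq_0_2PI_0 y H ltac:(lra) h); [left; auto | lra].
- rewrite <- cos_neg in h.
  destruct (cos_eq_0_2PI_0 (-y) ltac:(lra) ltac:(lra) h); [right; lra | lra].
Qed.

Lemma k3zero p1 p2 k1 k2 : p1^2 = 1/4 -> p2^2 = 1/4 -> p1*k1+p2*k2 = 0 -> p1*k1^3+p2*k2^3 = 0.
Proof.
intros h1 h2 h. assert (e : p2*k2 = -(p1*k1)) by lra.
assert (ek : k2^2 = k1^2).
{ assert (p2^2*k2^2 = p1^2*k1^2).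
  { replace (p2^2*k2^2) with ((p2*k2)^2) by ring. rewrite e. ring. }
  rewrite h1, h2 in H. lra. }
replace (p1*k1^3+p2*k2^3) with (k1^2*(p1*k1) + k2^2*(p2*k2)) by ring.
rewrite e, ek. ring.
Qed.

Theorem lemma5p4 (alpha : R) (Halpha : 1 < alpha < 2) :
  (forall xi : R * R, in_E alpha xi -> ~ in_K3 xi ->
     forall k : R * R, unit_vec k -> in_hess_kernel (w alpha) xi k ->
       dir3 (w alpha) xi k <> 0) /\
  (forall P : R * R, in_K3 P ->
     in_E alpha P /\
     forall k : R * R, unit_vec k -> in_hess_kernel (w alpha) P k ->
       dir3 (w alpha) P k = 0).
Proof.
split.
- intros xi [HM Hdet] HK k Hu Hker.
  generalize (Sf_pos_M xi HM); intro HS.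
  generalize (Hker false) (Hker true); intros R1 R2. unfold sumb in R1, R2.
  rewrite !hess_eq in R1, R2 by exact HS.
  unfold dir3, sumb. rewrite !d3w_eq by exact HS.
  destruct xi as [x1 x2], k as [k1 k2].
  unfold W2, W3, dl, Pf, Qf, sg, cg, unit_vec in *; cbn [coord fst snd Bool.eqb] in *.
  assert (HK' : ~ (cos x1 = 0 /\ cos x2 = 0)).
  { intros [h1 h2]. apply HK. destruct HM as [B1 [B2 _]]. simpl in B1, B2.
    split; simpl; apply cos0_M; auto. }
  rewrite <- (cos_half x1), <- (cos_half x2) in HK'.
  assert (Hsc1 : sin (x1/2)^2 + cos (x1/2)^2 = 1) by (rewrite <- (sin2_cos2 (x1/2)); unfold Rsqr; ring).
  assert (Hsc2 : sin (x2/2)^2 + cos (x2/2)^2 = 1) by (rewrite <- (sin2_cos2 (x2/2)); unfold Rsqr; ring).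
  assert (HSd : Sf (x1,x2) = sin(x1/2)^2 + sin(x2/2)^2) by reflexivity.
  assert (HE : 0 < Ef (alpha/2) (x1,x2)) by (unfold Ef; apply exp_pos).
  assert (Ha : 1/2 < alpha/2 < 1) by lra.
  set (s1 := sin (x1/2)) in *. set (s2 := sin (x2/2)) in *.
  set (g1 := cos (x1/2)) in *. set (g2 := cos (x2/2)) in *.
  set (E := Ef (alpha/2) (x1,x2)) in *. set (S := Sf (x1,x2)) in *. set (a := alpha/2) in *.
  clearbody s1 s2 g1 g2 E S a.
  assert (HSn : S <> 0) by lra. assert (HEn : E <> 0) by lra. assert (Han : a <> 0) by lra.
  set (t := s1*g1*k1 + s2*g2*k2).
  assert (K1 : S*(g1^2-s1^2)*k1 = 2*(1-a)*t*(s1*g1)).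
  { match type of R1 with ?L = _ => assert (X : S*(g1^2-s1^2)*k1 - 2*(1-a)*t*(s1*g1) = 2*S^2/(a*E) * L) by (unfold t; field; auto) end.
    rewrite R1 in X. lra. }
  assert (K2 : S*(g2^2-s2^2)*k2 = 2*(1-a)*t*(s2*g2)).
  { match type of R2 with ?L = _ => assert (X : S*(g2^2-s2^2)*k2 - 2*(1-a)*t*(s2*g2) = 2*S^2/(a*E) * L) by (unfold t; field; auto) end.
    rewrite R2 in X. lra. }
  assert (Hp1 : (s1*g1)^2 = (1-(g1^2-s1^2)^2)/4).
  { replace ((s1*g1)^2) with (s1^2*g1^2) by ring. replace (g1^2) with (1-s1^2) by lra. field. }
  assert (Hp2 : (s2*g2)^2 = (1-(g2^2-s2^2)^2)/4).
  { replace ((s2*g2)^2) with (s2^2*g2^2) by ring. replace (g2^2) with (1-s2^2) by lra. field. }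
  assert (HSc : S = 1 - ((g1^2-s1^2)+(g2^2-s2^2))/2) by lra.
  assert (HC := core (1-a) (g1^2-s1^2) (g2^2-s2^2) (s1*g1) (s2*g2) k1 k2 S t
     ltac:(lra) HSc HS Hp1 Hp2 Hu eq_refl K1 K2 HK').
  match goal with |- ?L <> 0 =>
    assert (X : L = a*E/S^3 * ((1-a)*(1+(1-a))*t^3 - 3*(1-a)*S*t*((g1^2-s1^2)/2*k1^2 + (g2^2-s2^2)/2*k2^2) - S^2*(s1*g1*k1^3+s2*g2*k2^3))) by (unfold t; field; auto) end.
  rewrite X. apply Rmult_integral_contrapositive_currified; [|exact HC].
  unfold Rdiv. repeat apply Rmult_integral_contrapositive_currified; auto.
  apply Rinv_neq_0_compat. apply pow_nonzero; auto.
- intros [x1 x2] HP. unfold in_K3 in HP; simpl in HP.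
  assert (Hpi := PI_RGT_0).
  assert (HM : in_M (x1,x2)).
  { unfold in_M; simpl. destruct HP as [[h1|h1] [h2|h2]]; rewrite h1, h2; repeat split; try lra;
      intro h; inversion h; lra. }
  assert (HS := Sf_pos_M _ HM).
  assert (Hc1 : cos x1 = 0) by (destruct HP as [[h|h] _]; rewrite h; [apply cos_PI2 | rewrite cos_neg; apply cos_PI2]).
  assert (Hc2 : cos x2 = 0) by (destruct HP as [_ [h|h]]; rewrite h; [apply cos_PI2 | rewrite cos_neg; apply cos_PI2]).
  rewrite <- (cos_half x1) in Hc1. rewrite <- (cos_half x2) in Hc2.
  split.
  + split; [exact HM|]. unfold hess_det. rewrite !hess_eq by exact HS.
    unfold W2, dl, Pf, Qf, sg, cg; cbn [coord fst snd Bool.eqb]. rewrite Hc1, Hc2. field. lra.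
  + intros [k1 k2] Hu Hker.
    generalize (Hker false) (Hker true); intros R1 R2. unfold sumb in R1, R2.
    rewrite !hess_eq in R1, R2 by exact HS.
    unfold dir3, sumb. rewrite !d3w_eq by exact HS.
    unfold W2, W3, dl, Pf, Qf, sg, cg, unit_vec in *; cbn [coord fst snd Bool.eqb] in *.
    assert (Hsc1 : sin (x1/2)^2 + cos (x1/2)^2 = 1) by (rewrite <- (sin2_cos2 (x1/2)); unfold Rsqr; ring).
    assert (Hsc2 : sin (x2/2)^2 + cos (x2/2)^2 = 1) by (rewrite <- (sin2_cos2 (x2/2)); unfold Rsqr; ring).
    assert (HE : 0 < Ef (alpha/2) (x1,x2)) by (unfold Ef; apply exp_pos).
    assert (Ha : 1/2 < alpha/2 < 1) by lra.
    set (s1 := sin (x1/2)) in *. set (s2 := sin (x2/2)) in *.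
    set (g1 := cos (x1/2)) in *. set (g2 := cos (x2/2)) in *.
    set (E := Ef (alpha/2) (x1,x2)) in *. set (S := Sf (x1,x2)) in *. set (a := alpha/2) in *.
    clearbody s1 s2 g1 g2 E S a.
    assert (HSn : S <> 0) by lra. assert (HEn : E <> 0) by lra. assert (Han : a <> 0) by lra.
    set (t := s1*g1*k1 + s2*g2*k2).
    assert (K1 : S*(g1^2-s1^2)*k1 = 2*(1-a)*t*(s1*g1)).
    { match type of R1 with ?L = _ => assert (X : S*(g1^2-s1^2)*k1 - 2*(1-a)*t*(s1*g1) = 2*S^2/(a*E) * L) by (unfold t; field; auto) end.
      rewrite R1 in X. lra. }
    assert (Hp1 : (s1*g1)^2 = 1/4).
    { replace ((s1*g1)^2) with (s1^2*g1^2) by ring. replace (g1^2) with (1-s1^2) by lra.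
      replace (s1^2) with (1/2) by lra. field. }
    assert (Hp2 : (s2*g2)^2 = 1/4).
    { replace ((s2*g2)^2) with (s2^2*g2^2) by ring. replace (g2^2) with (1-s2^2) by lra.
      replace (s2^2) with (1/2) by lra. field. }
    assert (T0 : t = 0).
    { rewrite Hc1 in K1. assert (p1n : s1*g1 <> 0) by (intro h; rewrite h in Hp1; lra).
      assert (2*(1-a)*(s1*g1)*t = 0) by lra.
      destruct (Rmult_integral _ _ H) as [h|h]; [|auto].
      exfalso. destruct (Rmult_integral _ _ h); [lra|auto]. }
    match goal with |- ?L = 0 =>
      assert (X : L = a*E/S^3 * ((1-a)*(1+(1-a))*t^3 - 3*(1-a)*S*t*((g1^2-s1^2)/2*k1^2 + (g2^2-s2^2)/2*k2^2) - S^2*(s1*g1*k1^3+s2*g2*k2^3))) by (unfold t; field; auto) end.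
    rewrite X, T0, Hc1, Hc2.
    rewrite (k3zero (s1*g1) (s2*g2) k1 k2 Hp1 Hp2) by (rewrite <- T0; unfold t; ring).
    ring.
Qed.
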